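(* Let $A,X,U$ be Banach spaces with $U\subseteq X$, let $\mathcal{A}$ and $\mathcal{M}_k$ ($k\ge1$) be linear operators from $L_1((0,T);A)$ to $L_1((0,T);X)$, let $u_0$ be a $U$-valued generalized random element, and let $f,g_k$ ($k\ge1$) be $X$-valued generalized random processes. Suppose that for every $v_0\in U$ and $\varphi\in L_1((0,T);X)$ the deterministic equation $v(t)=v_0+\int_0^t(\mathcal{A}v)(s)ds+\int_0^t\varphi(s)ds$ has a unique $w(A,X)$ solution $v(t)=V(t,v_0,\varphi)$. Then the equation $du(t)=(\mathcal{A}u(t)+f(t))dt+(\mathcal{M}_ku(t)+g_k(t))dw_k(t)$, $0<t\le T$, $u|_{t=0}=u_0$, has a unique $w(A,X)$ Wiener chaos solution, and its coefficients are given by $$u_\alpha(t)=V(t,u_{0,\alpha},f_\alpha)+\sum_{i,k}\sqrt{\alpha_i^k}\,V(t,0,m_i\mathcal{M}_ku_{\alpha^-(i,k)})+\sum_{i,k}\sqrt{\alpha_i^k}\,V(t,0,m_ig_{k,\alpha^-(i,k)}).$$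
   Context: Independent standard Wiener processes $w_k$, $k\ge1$, on a stochastic basis; $T\in(0,\infty)$ fixed; $\{m_i\}$ an orthonormal basis of $L_2((0,T))$ with $m_i\in L_\infty((0,T))$; $\xi_{ik}=\int_0^Tm_i\,dw_k$; $\mathcal{J}$ the multi-indices $\alpha=(\alpha_i^k)_{i,k\ge1}$ of nonnegative integers with finitely many nonzero entries; $\xi_\alpha=(\prod\alpha_i^k!)^{-1/2}\prod_{i,k}H_{\alpha_i^k}(\xi_{ik})$ (Hermite polynomials $H_n$) is the Cameron–Martin basis; $\alpha^-(i,k)$ equals $\alpha$ except its $(i,k)$ entry is $\max(\alpha_i^k-1,0)$. An $X$-valued generalized random element is a formal series $\sum_\alpha u_\alpha\xi_\alpha$ with $u_\alpha\in X$; an $X$-valued generalized random process is such a series with $u_\alpha\in L_1((0,T);X)$. A $w(A,X)$ solution of the deterministic equation is $v\in L_1((0,T);A)$ for which the equality holds in $L_1((0,T);X)$. An $A$-valued generalized random process $u$ is a $w(A,X)$ Wiener chaos solution of the stochastic equation if, for every $\alpha\in\mathcal{J}$, $u_\alpha\in L_1((0,T);A)$ and, in $L_1((0,T);X)$, $u_\alpha(t)=u_{0,\alpha}+\int_0^t(\mathcal{A}u_\alpha+f_\alpha)(s)ds+\int_0^t\sum_{i,k}\sqrt{\alpha_i^k}\,(\mathcal{M}_ku_{\alpha^-(i,k)}+g_{k,\alpha^-(i,k)})(s)m_i(s)ds$ (this system is the propagator). *)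

(* Defs.v *)
From HB Require Import structures.
From mathcomp Require Import all_boot all_order all_algebra.
From mathcomp Require Import all_classical all_reals all_analysis.
Set Implicit Arguments. Unset Strict Implicit. Unset Printing Implicit Defensive.
Import Order.TTheory GRing.Theory Num.Theory.
Import numFieldNormedType.Exports.
Local Open Scope classical_set_scope.
Local Open Scope ring_scope.

Section Bochner.
Context {R : realType}.
Local Notation mu := (@lebesgue_measure R).

Definition ae_on (D : set R) (P : R -> Prop) : Prop :=
  {ae mu, forall t, D t -> P t}.

Context {X : normedModType R}.

Definition simple_on (D : set R) (s : R -> X) : Prop :=
  finite_set (s @` D) /\
  forall x : X, measurable (D `&` s @^-1` [set x] : set (measurableTypeR R)).

Definition simple_integral (D : set R) (s : R -> X) : X :=
  \sum_(x \in s @` D) (fine (mu (D `&` s @^-1` [set x]))) *: x.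

Definition strongly_measurable_on (D : set R) (f : R -> X) : Prop :=
  exists s : nat -> R -> X, (forall n, simple_on D (s n)) /\
    forall t, D t -> s n t @[n --> \oo] --> f t.

Definition L1_on (D : set R) (f : R -> X) : Prop :=
  exists g : R -> X, strongly_measurable_on D g /\
    ae_on D (fun t => f t = g t) /\
    (\int[mu]_(t in D) (`|g t|)%:E < +oo)%E.

Definition bochner_integral (D : set R) (f : R -> X) (x : X) : Prop :=
  L1_on D f /\
  exists (g : R -> X) (s : nat -> R -> X),
    strongly_measurable_on D g /\ ae_on D (fun t => f t = g t) /\
    (forall n, simple_on D (s n)) /\
    (forall n, (\int[mu]_(t in D) (`|s n t|)%:E < +oo)%E) /\
    ((fun n => (\int[mu]_(t in D) (`|s n t - g t|)%:E)%E) @ \oo --> 0%E) /\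
    (simple_integral D (s n) @[n --> \oo] --> x).

End Bochner.

(* Linear operators L_1((0,T);A) -> L_1((0,T);X), acting on           *)
(* representatives and compatible with a.e. equality.                 *)
Definition L1_operator {R : realType} {A X : normedModType R} (T : R)
    (op : (R -> A) -> R -> X) : Prop :=
  [/\ forall v, L1_on `]0, T[ v -> L1_on `]0, T[ (op v),
      forall v w, L1_on `]0, T[ v -> L1_on `]0, T[ w ->
        ae_on `]0, T[ (fun t => v t = w t) ->
        ae_on `]0, T[ (fun t => op v t = op w t) &
      forall (c : R) v w, L1_on `]0, T[ v -> L1_on `]0, T[ w ->
        ae_on `]0, T[ (fun t => op (fun s => c *: v s + w s) t =
                                 c *: op v t + op w t)].

(* Multi-indices  alpha = (alpha_i^k), indices i, k counted from 0.    *)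
Definition mindex := nat -> nat -> nat.

Definition mindex_bound (a : mindex) (N : nat) : Prop :=
  forall i k, (N <= i)%N \/ (N <= k)%N -> a i k = 0%N.

Definition is_mindex (a : mindex) : Prop := exists N, mindex_bound a N.

Definition mminus (a : mindex) (i k : nat) : mindex :=
  fun j l => if (j == i) && (l == k) then (a j l).-1 else a j l.

Section Solutions.
Context {R : realType} {A X U : normedModType R}.
Variables (T : R) (iA : A -> X) (iU : U -> X).

Definition w_solution (opA : (R -> A) -> R -> X) (v0 : U) (phi : R -> X)
    (v : R -> A) : Prop :=
  L1_on `]0, T[ v /\
  ae_on `]0, T[ (fun t => exists I1 I2 : X,
    bochner_integral `]0, t[ (opA v) I1 /\
    bochner_integral `]0, t[ phi I2 /\
    iA (v t) = iU v0 + I1 + I2).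

(* w(A,X) Wiener chaos solution: the propagator holds for every alpha in J;
   the (finite) sum over (i,k) is written over i, k < N for any bound N
   of the support of alpha *)
Definition wc_solution (opA : (R -> A) -> R -> X)
    (opM : nat -> (R -> A) -> R -> X) (m : nat -> R -> R)
    (u0 : mindex -> U) (f : mindex -> R -> X) (g : nat -> mindex -> R -> X)
    (u : mindex -> R -> A) : Prop :=
  forall a, is_mindex a ->
    L1_on `]0, T[ (u a) /\
    forall N, mindex_bound a N ->
      ae_on `]0, T[ (fun t => exists I1 I2 : X,
        bochner_integral `]0, t[ (fun s => opA (u a) s + f a s) I1 /\
        bochner_integral `]0, t[
          (fun s => \sum_(i < N) \sum_(k < N)
             (Num.sqrt (a i k)%:R * m i s) *:
               (opM k (u (mminus a i k)) s + g k (mminus a i k) s)) I2 /\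
        iA (u a t) = iU (u0 a) + I1 + I2).

End Solutions.

(* Main.v *)
Require Import Defs.
From HB Require Import structures.
From mathcomp Require Import all_boot all_order all_algebra.
From mathcomp Require Import all_classical all_reals all_analysis.
From mathcomp Require Import measurable_realfun.
Set Implicit Arguments. Unset Strict Implicit. Unset Printing Implicit Defensive.
Import Order.TTheory GRing.Theory Num.Theory.
Import numFieldNormedType.Exports.
Local Open Scope classical_set_scope.
Local Open Scope ring_scope.

Section P1.
Context {R : realType}.
Local Notation mu := (@lebesgue_measure R).
Local Notation MR := (measurableTypeR R).

Lemma w_U (A B : set MR) : measurable A -> measurable B -> A `&` B = set0 ->
  (mu A < +oo)%E -> (mu B < +oo)%E ->
  fine (mu (A `|` B)) = fine (mu A) + fine (mu B).
Proof.
move=> mA mB AB fA fB; rewrite measureU // fineD //.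
  by rewrite ge0_fin_numE.
by rewrite ge0_fin_numE.
Qed.

Lemma w_big (I : choiceType) (r : seq I) (P : pred I) (G : I -> set MR) (D : set MR) :
  uniq r -> measurable D -> (mu D < +oo)%E ->
  (forall i, measurable (G i)) -> (forall i, G i `<=` D) ->
  (forall i j, i != j -> G i `&` G j = set0) ->
  fine (mu (\big[setU/set0]_(i <- r | P i) G i)) = \sum_(i <- r | P i) fine (mu (G i)).
Proof.
move=> ur mD fD mG GD dG; elim: r ur => [|a r IH] /=.
  by rewrite !big_nil measure0.
move=> /andP[ar ur]; rewrite !big_cons; case: (P a); last exact: IH.
have fin : forall A : set MR, measurable A -> A `<=` D -> (mu A < +oo)%E.
  by move=> A mA AD; apply: le_lt_trans fD; apply: le_measure => //; rewrite inE.
rewrite w_U ?IH //.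
- exact: bigsetU_measurable.
- rewrite -subset0 => t; rewrite -bigcup_seq_cond.
  move=> [Ga [j /= /andP[jr _] Gj]].
  have : (G a `&` G j) t by [].
  by rewrite dG //; apply/eqP => aj; rewrite aj jr in ar.
- exact: fin.
- apply: fin; first exact: bigsetU_measurable.
  move=> t; rewrite -bigcup_seq_cond.
  by move=> [j _ Gj]; exact: GD Gj.
Qed.

Lemma sum_pred1_uniq (Y : nmodType) (I : eqType) (l : seq I) (a : I) (c : Y) :
  uniq l -> a \in l -> \sum_(x <- l | a == x) c = c.
Proof.
move=> ul al; rewrite -big_filter.
rewrite (@eq_filter _ _ (pred1 a)); last by move=> x /=; rewrite eq_sym.
by rewrite filter_pred1_uniq // big_seq1.
Qed.

Context {X : normedModType R}.

Lemma SI_list (D : set R) (s : R -> X) (r : seq X) : uniq r ->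
  s @` D `<=` [set` r] ->
  simple_integral D s = \sum_(x <- r) fine (mu (D `&` s @^-1` [set x])) *: x.
Proof.
move=> ur sr; rewrite /simple_integral (fsbig_fwiden r) //.
move=> x [xr nx] /=.
have -> : D `&` s @^-1` [set x] = set0.
  rewrite -subset0 => t [Dt /= stx]; apply: nx; by exists t.
by rewrite measure0 /= scale0r.
Qed.

Lemma SI_comp (P : choiceType) (sg : R -> P) (F : P -> X) (lp : seq P) (D : set R) :
  measurable D -> (mu D < +oo)%E -> uniq lp -> sg @` D `<=` [set` lp] ->
  (forall p, measurable (D `&` sg @^-1` [set p])) ->
  simple_integral D (fun t => F (sg t)) =
  \sum_(p <- lp) fine (mu (D `&` sg @^-1` [set p])) *: F p.
Proof.
move=> mD fD ul sl ml.
rewrite (@SI_list _ _ (undup (map F lp))); last 2 first.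
- exact: undup_uniq.
- move=> _ [t Dt <-] /=; rewrite mem_undup; apply: map_f.
  by have := sl (sg t) (ex_intro2 _ _ t Dt erefl).
have E x : D `&` (fun t => F (sg t)) @^-1` [set x] =
    \big[setU/set0]_(p <- lp | F p == x) (D `&` sg @^-1` [set p]).
  rewrite eqEsubset; split => t.
    move=> [Dt /= Fx]; rewrite -bigcup_seq_cond; exists (sg t) => //=.
    apply/andP; split; last by apply/eqP.
    exact: (sl (sg t) (ex_intro2 _ _ t Dt erefl)).
  rewrite -bigcup_seq_cond => -[p /= /andP[_ /eqP Fp] [Dt /= sgp]].
  by split => //=; rewrite sgp.
have W x : fine (mu (D `&` (fun t => F (sg t)) @^-1` [set x])) =
    \sum_(p <- lp | F p == x) fine (mu (D `&` sg @^-1` [set p])).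
  rewrite E; apply: (@w_big _ _ _ _ D) => //.
  move=> p q pq; rewrite -subset0 => t [[_ /= tp] [_ /= tq]].
  by move/eqP: pq; apply; rewrite -tp -tq.
under eq_bigr => x _ do rewrite W scaler_suml.
transitivity (\sum_(x <- undup [seq F i | i <- lp]) \sum_(p <- lp | F p == x)
   fine (mu (D `&` sg @^-1` [set p])) *: F p).
  by apply: eq_bigr => x _; apply: eq_bigr => p /eqP ->.
rewrite /= (exchange_big_dep predT) //=.
apply: eq_big_seq => p pl.
by rewrite sum_pred1_uniq // ?undup_uniq // mem_undup map_f.
Qed.


Lemma simple_comp2 {X1 X2 Y : normedModType R} (D : set R) (s1 : R -> X1)
    (s2 : R -> X2) (F : X1 -> X2 -> Y) :
  simple_on D s1 -> simple_on D s2 -> simple_on D (fun t => F (s1 t) (s2 t)).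
Proof.
move=> [f1 m1] [f2 m2]; split; first exact: finite_image11.
move=> x.
have -> : D `&` (fun t => F (s1 t) (s2 t)) @^-1` [set x] =
  \bigcup_(p in (s1 @` D `*` s2 @` D) `&` [set p | F p.1 p.2 = x])
     ((D `&` s1 @^-1` [set p.1]) `&` (D `&` s2 @^-1` [set p.2])).
  rewrite eqEsubset; split => t.
    move=> [Dt /= Fx]; exists (s1 t, s2 t) => //=.
    by split => //; split; exists t.
  move=> [p /= [_ Fp] [[Dt /= e1] [_ /= e2]]].
  by split => //=; rewrite e1 e2.
apply: fin_bigcup_measurable.
  by apply: finite_setIl; apply: finite_setX.
by move=> p _; apply: measurableI.
Qed.

Lemma SI_lin (D : set R) (s s' : R -> X) (c : R) :
  measurable D -> (mu D < +oo)%E -> simple_on D s -> simple_on D s' ->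
  simple_integral D (fun t => c *: s t + s' t) =
  c *: simple_integral D s + simple_integral D s'.
Proof.
move=> mD fD [f1 m1] [f2 m2].
pose sg t := (s t, s' t).
pose lp := finmap.enum_fset (fset_set (s @` D `*` s' @` D)).
have ul : uniq lp by exact: finmap.fset_uniq.
have sl : sg @` D `<=` [set` lp].
  move=> _ [t Dt <-] /=; rewrite /lp in_fset_set; last exact: finite_setX.
  by rewrite inE; split; exists t.
have ml p : measurable (D `&` sg @^-1` [set p]).
  rewrite (_ : _ `&` _ = (D `&` s @^-1` [set p.1]) `&` (D `&` s' @^-1` [set p.2])).
    exact: (measurableI _ _ (m1 p.1) (m2 p.2)).
  rewrite eqEsubset; split => t.
    by move=> [Dt /= <-]; do 2!split.
  by move=> [[Dt /= e1] [_ /= e2]]; split => //=; rewrite /sg e1 e2; case: p {e1 e2}.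
have h1 := @SI_comp _ sg (fun p => p.1) lp D mD fD ul sl ml.
have h2 := @SI_comp _ sg (fun p => p.2) lp D mD fD ul sl ml.
have h3 := @SI_comp _ sg (fun p => c *: p.1 + p.2) lp D mD fD ul sl ml.
rewrite /= in h1 h2 h3.
rewrite h3 h1 h2 scaler_sumr -big_split /=.
apply: eq_bigr => p _.
by rewrite scalerDr !scalerA mulrC.
Qed.

End P1.


Import HBSimple.
Section P2.
Context {R : realType}.
Local Notation mu := (@lebesgue_measure R).
Local Notation MR := (measurableTypeR R).

Lemma ae_mono2 (D : set MR) (P Q S : R -> Prop) :
  (forall t, D t -> P t -> Q t -> S t) -> ae_on D P -> ae_on D Q -> ae_on D S.
Proof.
move=> H; rewrite /ae_on; apply: (filterS2 (ae_filter_ringOfSetsType mu)) => t HP HQ Dt; exact: H (HP Dt) (HQ Dt).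
Qed.

Lemma ae_mono (D : set MR) (P Q : R -> Prop) :
  (forall t, D t -> P t -> Q t) -> ae_on D P -> ae_on D Q.
Proof.
move=> H; rewrite /ae_on; apply: (@filterS _ _ (ae_filter_ringOfSetsType mu)) => t HP Dt; exact: H (HP Dt).
Qed.

Lemma ae_all (D : set MR) (P : R -> Prop) : (forall t, D t -> P t) -> ae_on D P.
Proof. by move=> H; rewrite /ae_on; apply: nearW. Qed.

Lemma ae_sub (D D' : set R) (P : R -> Prop) : D' `<=` D -> ae_on D P -> ae_on D' P.
Proof. by move=> DD; rewrite /ae_on; apply: (@filterS _ _ (ae_filter_ringOfSetsType mu)) => t HP Dt; apply: HP; apply: DD. Qed.


Lemma simple_meas_comp {X : normedModType R} (D : set MR) (s : R -> X) (G : X -> R) :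
  simple_on D s -> measurable_fun D (fun t => G (s t)).
Proof.
move=> [fs ms] mD B mB.
have -> : D `&` (fun t => G (s t)) @^-1` B =
    \bigcup_(x in s @` D `&` G @^-1` B) (D `&` s @^-1` [set x]).
  rewrite eqEsubset; split => t.
    by move=> [Dt /= GB]; exists (s t) => //; split => //; exists t.
  by move=> [x [_ /= Gx] [Dt /= sx]]; split => //=; rewrite sx.
apply: fin_bigcup_measurable; first exact: finite_setIl.
by move=> x _; exact: ms.
Qed.

Lemma sm_norm {X : normedModType R} (D : set MR) (f : R -> X) :
  strongly_measurable_on D f -> measurable_fun D (fun t => `|f t|).
Proof.
move=> [s [ss cs]].
apply: (@measurable_realfun.measurable_fun_cvg _ _ _ _ (fun n t => `|s n t|)).
  by move=> n; exact: simple_meas_comp.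
by move=> t Dt; apply: cvg_norm; exact: cs.
Qed.

Lemma sm_comp2 {X1 X2 Y : normedModType R} (D : set MR) (f1 : R -> X1) (f2 : R -> X2)
    (F : X1 -> X2 -> Y) :
  (forall (u1 : nat -> X1) (u2 : nat -> X2) a1 a2, u1 n @[n --> \oo] --> a1 ->
     u2 n @[n --> \oo] --> a2 -> F (u1 n) (u2 n) @[n --> \oo] --> F a1 a2) ->
  strongly_measurable_on D f1 -> strongly_measurable_on D f2 ->
  strongly_measurable_on D (fun t => F (f1 t) (f2 t)).
Proof.
move=> HF [s1 [ss1 cs1]] [s2 [ss2 cs2]].
exists (fun n t => F (s1 n t) (s2 n t)); split.
  by move=> n; exact: simple_comp2.
by move=> t Dt; apply: HF; [exact: cs1|exact: cs2].
Qed.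

Lemma sm_comb {X : normedModType R} (D : set MR) (f g : R -> X) (c : R) :
  strongly_measurable_on D f -> strongly_measurable_on D g ->
  strongly_measurable_on D (fun t => c *: f t + g t).
Proof.
apply: (sm_comp2 (F := fun a b => c *: a + b)) => u1 u2 a1 a2 h1 h2.
apply: cvgD => //; exact: cvgZl_tmp.
Qed.

Lemma sm_mul {X : normedModType R} (D : set MR) (m : R -> R) (g : R -> X) :
  measurable D -> measurable_fun D m ->
  strongly_measurable_on D g -> strongly_measurable_on D (fun t => m t *: g t).
Proof.
move=> mD mm sg.
have [h hc] := approximation_sfun mD (proj2 (measurable_realfun.measurable_EFinP D m) mm).
have smm : strongly_measurable_on (X := R^o) D m.
  exists (fun n t => HBSimple.SimpleFun.sort (h n) t); split.
    move=> n; split.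
      exact (fimfun_inP (h n) D).
    by move=> x; exact (measurable_funP1 (h n) x mD).
  by move=> t Dt; exact: (fine_cvg (hc t Dt)).
apply: (sm_comp2 (X1 := R^o) (F := fun a b => a *: b)) => // u1 u2 a1 a2 h1 h2.
exact: cvgZ.
Qed.


Lemma mEFin (D : set MR) (u : R -> R) : measurable_fun D u ->
  measurable_fun D (fun t => (u t)%:E).
Proof. by move=> mu'; apply/measurable_realfun.measurable_EFinP. Qed.

Lemma int_le_sum (D : set MR) (u v w : R -> R) (k : R) : measurable D ->
  measurable_fun D u -> measurable_fun D v -> measurable_fun D w ->
  (forall t, D t -> 0 <= u t) -> (forall t, D t -> 0 <= v t) ->
  (forall t, D t -> 0 <= w t) -> 0 <= k ->
  (forall t, D t -> u t <= k * v t + w t) ->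
  (\int[mu]_(t in D) (u t)%:E <=
     k%:E * \int[mu]_(t in D) (v t)%:E + \int[mu]_(t in D) (w t)%:E)%E.
Proof.
move=> mD mu' mv mw u0 v0 w0 k0 le.
have mkv : measurable_fun D (fun t => k * v t).
  exact: (measurable_realfun.measurable_funM (measurable_cst _) mv).
apply: (@le_trans _ _ (\int[mu]_(t in D) ((k * v t)%:E + (w t)%:E))%E).
  apply: (ge0_le_integral mu mD _ (mEFin mu') (emeasurable_funD (mEFin mkv) (mEFin mw))).
  - by move=> t Dt; rewrite lee_fin u0.
  - by move=> t Dt; rewrite -EFinD lee_fin le.
have v0' : forall t, D t -> (0 <= (v t)%:E)%E by move=> t Dt; rewrite lee_fin; exact: v0.
have w0' : forall t, D t -> (0 <= (w t)%:E)%E by move=> t Dt; rewrite lee_fin; exact: w0.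
have kv0' : forall t, D t -> (0 <= (k * v t)%:E)%E.
  by move=> t Dt; rewrite lee_fin; apply: mulr_ge0 => //; exact: v0.
rewrite (ge0_integralD mu mD kv0' (mEFin mkv) w0' (mEFin mw)).
rewrite (_ : (fun t => (k * v t)%:E) = (fun t => k%:E * (v t)%:E)%E); last first.
  by apply: funext => t; rewrite EFinM.
by rewrite (ge0_integralZl mu mD (mEFin mv) v0').
Qed.


Context {X : normedModType R}.

Lemma sm_simple (D : set MR) (s : R -> X) : simple_on D s -> strongly_measurable_on D s.
Proof. by move=> ss; exists (fun _ => s); split => // t Dt; exact: cvg_cst. Qed.

Lemma int_norm_comb (D : set MR) (u v : R -> X) (c : R) : measurable D ->
  strongly_measurable_on D u -> strongly_measurable_on D v ->
  (\int[mu]_(t in D) (`|u t|)%:E < +oo)%E -> (\int[mu]_(t in D) (`|v t|)%:E < +oo)%E ->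
  (\int[mu]_(t in D) (`|c *: u t + v t|)%:E < +oo)%E.
Proof.
move=> mD su sv iu iv.
apply: (le_lt_trans (int_le_sum (k := `|c|) mD (sm_norm (sm_comb c su sv))
   (sm_norm su) (sm_norm sv) _ _ _ _ _)) => //.
- by move=> t _; rewrite (le_trans (ler_normD _ _)) // normrZ.
- apply: lte_add_pinfty => //; apply: lte_mul_pinfty => //.
Qed.

Lemma L1_comb (D : set MR) (f h : R -> X) (c : R) : measurable D ->
  L1_on D f -> L1_on D h -> L1_on D (fun t => c *: f t + h t).
Proof.
move=> mD [g1 [s1 [a1 i1]]] [g2 [s2 [a2 i2]]].
exists (fun t => c *: g1 t + g2 t); split; first exact: sm_comb.
split; last exact: int_norm_comb.
by apply: ae_mono2 a1 a2 => t _ -> ->.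
Qed.

Lemma L1_ae (D : set MR) (f f' : R -> X) :
  L1_on D f -> ae_on D (fun t => f t = f' t) -> L1_on D f'.
Proof.
move=> [g [s [a i]]] e; exists g; split => //; split => //.
by apply: ae_mono2 a e => t _ <-.
Qed.

Lemma simple_cst (D : set MR) (x : X) : measurable D -> simple_on D (fun _ => x).
Proof.
move=> mD; split.
  apply: (sub_finite_set (B := [set x])); last exact: finite_set1.
  by move=> _ [t _ <-].
move=> y; have [->|nxy] := pselect (x = y).
  by rewrite (_ : _ `&` _ = D) //; rewrite eqEsubset; split => t // [].
rewrite (_ : _ `&` _ = set0) //; rewrite -subset0 => t [_ /= xy]; exact: nxy.
Qed.

Lemma L1_zero (D : set MR) : measurable D -> L1_on D (fun _ => 0 : X).
Proof.
move=> mD; exists (fun _ => 0); split; first exact/sm_simple/simple_cst.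
split; first exact: ae_all.
by rewrite (_ : (fun t => _) = cst 0%E); [rewrite integral0|apply: funext => t; rewrite normr0].
Qed.

Lemma L1_sum (D : set MR) (I : eqType) (r : seq I) (phi : I -> R -> X) : measurable D ->
  (forall i, i \in r -> L1_on D (phi i)) -> L1_on D (fun t => \sum_(i <- r) phi i t).
Proof.
move=> mD; elim: r => [|a r IH] H.
  by under eq_fun do rewrite big_nil; exact: L1_zero.
under eq_fun do rewrite big_cons -[phi a _]scale1r.
apply: L1_comb => //; first by apply: H; rewrite inE eqxx.
by apply: IH => i ir; apply: H; rewrite inE ir orbT.
Qed.


Lemma L1_mul (D : set MR) (m : R -> R) (g : R -> X) : measurable D ->
  measurable_fun D m -> (exists C : R, ae_on D (fun t => `|m t| <= C)) ->
  L1_on D g -> L1_on D (fun t => m t *: g t).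
Proof.
move=> mD mm [C hC] [g1 [s1 [a1 i1]]].
exists (fun t => m t *: g1 t); split; first exact: sm_mul.
split; first by apply: ae_mono2 a1 (ae_all (fun _ _ => I)) => t _ ->.
set C' := Num.max C 0.
have C'0 : 0 <= C' by rewrite /C' le_max lexx orbT.
have mn1 := sm_norm s1.
have mC1 : measurable_fun D (fun t => C' * `|g1 t|).
  exact: (measurable_realfun.measurable_funM (measurable_cst _) mn1).
apply: (le_lt_trans (ae_ge0_le_integral mD _ (mEFin (sm_norm (sm_mul mD mm s1))) _
  (mEFin mC1) _)).
- by move=> t _; rewrite lee_fin.
- by move=> t _; rewrite lee_fin mulr_ge0.
- apply: ae_mono hC => t _ mC; rewrite lee_fin normrZ ler_wpM2r //.
  by rewrite (le_trans mC) // /C' le_max lexx.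
- rewrite (_ : (fun t => (C' * `|g1 t|)%:E) = (fun t => C'%:E * (`|g1 t|)%:E)%E); last first.
    by apply: funext => t; rewrite EFinM.
  rewrite (ge0_integralZl mu mD (mEFin mn1)) //.
  by apply: lte_mul_pinfty => //; rewrite lee_fin.
Qed.


Lemma sm_sub (D : set MR) (u v : R -> X) :
  strongly_measurable_on D u -> strongly_measurable_on D v ->
  strongly_measurable_on D (fun t => u t - v t).
Proof.
apply: (sm_comp2 (F := fun a b => a - b)) => u1 u2 a1 a2 h1 h2.
exact: cvgB.
Qed.

Lemma bochner_ae (D : set MR) (f f' : R -> X) (x : X) :
  bochner_integral D f x -> ae_on D (fun t => f t = f' t) -> bochner_integral D f' x.
Proof.
move=> [L [g [s [sg [ag rest]]]]] e; split; first exact: L1_ae e.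
exists g, s; split => //; split => //.
by apply: ae_mono2 ag e => t _ <-.
Qed.

Lemma bochner_comb (D : set MR) (f h : R -> X) (x y : X) (c : R) :
  measurable D -> (mu D < +oo)%E ->
  bochner_integral D f x -> bochner_integral D h y ->
  bochner_integral D (fun t => c *: f t + h t) (c *: x + y).
Proof.
move=> mD fD [Lf [g1 [s1 [sg1 [ag1 [ss1 [is1 [cv1 l1]]]]]]]].
move=> [Lh [g2 [s2 [sg2 [ag2 [ss2 [is2 [cv2 l2]]]]]]]].
split; first exact: L1_comb.
exists (fun t => c *: g1 t + g2 t), (fun n t => c *: s1 n t + s2 n t).
split; first exact: sm_comb.
split; first by apply: ae_mono2 ag1 ag2 => t _ -> ->.
split; first by move=> n; exact: (simple_comp2 (fun a b => c *: a + b) (ss1 n) (ss2 n)).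

split; first by move=> n; apply: int_norm_comb => //; exact: sm_simple.
split.
  apply: (squeeze_cvge (f := cst 0%E)
     (h := fun n => `|c|%:E * \int[mu]_(t in D) (`|s1 n t - g1 t|)%:E +
               \int[mu]_(t in D) (`|s2 n t - g2 t|)%:E)%E).
  - apply: nearW => n; apply/andP; split.
      by apply: integral_ge0 => t _; rewrite lee_fin.
    apply: int_le_sum => //.
    + apply: sm_norm; apply: sm_sub; last exact: sm_comb.
      by apply: sm_comb; exact: sm_simple.
    + by apply: sm_norm; apply: sm_sub => //; exact: sm_simple.
    + by apply: sm_norm; apply: sm_sub => //; exact: sm_simple.
    + move=> t _.
      rewrite (_ : _ - _ = c *: (s1 n t - g1 t) + (s2 n t - g2 t)); last first.
        by rewrite scalerBr addrACA opprD.
      by rewrite (le_trans (ler_normD _ _)) // normrZ.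
  - exact: cvg_cst.
  - rewrite -[X in _ --> X]adde0 -[X in (X + _)%E](mule0 `|c|%:E).
    apply: cvgeD => //; apply: cvgeZl => //.
under eq_fun => n do rewrite (SI_lin c mD fD (ss1 n) (ss2 n)).
by apply: cvgD => //; exact: cvgZl_tmp.
Qed.

End P2.


Section Itv.
Context {R : realType}.
Local Notation mu := (@lebesgue_measure R).
Local Notation MR := (measurableTypeR R).

Lemma itv_meas (t : R) : measurable (`]0, t[ : set MR).
Proof. exact: measurable_itv. Qed.

Lemma itv_fin (t : R) : (mu (`]0%R, t[ : set MR) < +oo)%E.
Proof. by rewrite lebesgue_measure_itv /=; case: ifP => // _; rewrite ltry. Qed.

Lemma itv_sub (t T : R) : t <= T -> `]0, t[ `<=` (`]0, T[ : set R).
Proof.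
move=> tT x /=; rewrite !in_itv /= => /andP[-> xt].
exact: lt_le_trans xt tT.
Qed.

Lemma AC5 (V : zmodType) (u a b c d : V) : a + c + (u + b + d) = u + (a + b) + (c + d).
Proof.
by rewrite !addrA [a + c + u]addrC !addrA [u + a + c + b]addrAC.
Qed.

End Itv.

Section Vlin.
Context {R : realType} {A X U : normedModType R}.
Local Notation mu := (@lebesgue_measure R).
Local Notation MR := (measurableTypeR R).
Context (T : R) (iA : {linear A -> X}) (iU : {linear U -> X}).
Context (opA : (R -> A) -> R -> X) (opA_lin : L1_operator T opA).
Context (V : U -> (R -> X) -> R -> A).
Context (V_sol : forall v0 phi, L1_on `]0, T[ phi ->
      w_solution T iA iU opA v0 phi (V v0 phi)).
Context (V_uniq : forall v0 phi v, L1_on `]0, T[ phi ->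
      w_solution T iA iU opA v0 phi v ->
      ae_on `]0, T[ (fun t => v t = V v0 phi t)).

Let mT := @itv_meas R T.

Lemma bochner_ext (D : set MR) (f f' : R -> X) (x : X) :
  (forall s, f s = f' s) -> bochner_integral D f x -> bochner_integral D f' x.
Proof. by move=> e b; apply: bochner_ae b _; apply: ae_all => s _. Qed.

Lemma V_L1 v0 phi : L1_on `]0, T[ phi -> L1_on `]0, T[ (V v0 phi).
Proof. by move=> L; case: (V_sol v0 L). Qed.

Lemma V2 (c : R) v0 (psi phi : R -> X) :
  L1_on `]0, T[ psi -> L1_on `]0, T[ phi ->
  ae_on `]0, T[ (fun t => V v0 (fun s => c *: psi s + phi s) t =
                          c *: V 0 psi t + V v0 phi t).
Proof.
move=> Lpsi Lphi.
have Lcomb : L1_on `]0, T[ (fun s => c *: psi s + phi s) by exact: L1_comb.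
suff W : w_solution T iA iU opA v0 (fun s => c *: psi s + phi s)
    (fun t => c *: V 0 psi t + V v0 phi t).
  by apply: ae_mono (V_uniq Lcomb W) => t _ ->.
have [L1 S1] := V_sol 0 Lpsi.
have [L2 S2] := V_sol v0 Lphi.
have [_ _ lin] := opA_lin.
have HA := lin c _ _ L1 L2.
split; first exact: L1_comb.
apply: ae_mono2 S1 S2 => t Tt [I1 [I2 [b1 [b2 e1]]]] [J1 [J2 [d1 [d2 e2]]]].
have tT : t <= T by move: Tt; rewrite /= in_itv /= => /andP[_ /ltW].
exists (c *: I1 + J1), (c *: I2 + J2); split; last split.
- apply: bochner_ae (bochner_comb c (itv_meas t) (itv_fin t) b1 d1) _.
  by apply: ae_sub (itv_sub tT) _; apply: ae_mono HA => s _ ->.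
- exact: (bochner_comb c (itv_meas t) (itv_fin t) b2 d2).
- rewrite linearD linearZ /= e1 e2 linear0 add0r scalerDr.
  by rewrite AC5.
Qed.


Lemma Vsum v0 (phi0 : R -> X) (I : eqType) (r : seq I) (c : I -> R) (phi : I -> R -> X) :
  L1_on `]0, T[ phi0 -> (forall i, i \in r -> L1_on `]0, T[ (phi i)) ->
  ae_on `]0, T[ (fun t => V v0 (fun s => phi0 s + \sum_(i <- r) c i *: phi i s) t =
                          V v0 phi0 t + \sum_(i <- r) c i *: V 0 (phi i) t).
Proof.
move=> L0; elim: r => [|a r IH] H.
  apply: ae_all => t _; rewrite big_nil addr0.
  by rewrite (_ : (fun s => _) = phi0) //; apply: funext => s; rewrite big_nil addr0.
have Lr : L1_on `]0, T[ (fun s => phi0 s + \sum_(i <- r) c i *: phi i s).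
  rewrite (_ : (fun s => _) = (fun s => 1 *: phi0 s + \sum_(i <- r) c i *: phi i s)); last first.
    by apply: funext => s; rewrite scale1r.
  apply: L1_comb => //; apply: L1_sum => // i ir.
  rewrite (_ : (fun s => _) = (fun s => c i *: phi i s + 0)); last first.
    by apply: funext => s; rewrite addr0.
  by apply: L1_comb => //; [apply: H; rewrite inE ir orbT|exact: L1_zero].
have La : L1_on `]0, T[ (phi a) by apply: H; rewrite inE eqxx.
have IH' : ae_on `]0, T[ (fun t => V v0 (fun s => phi0 s + \sum_(i <- r) c i *: phi i s) t =
                          V v0 phi0 t + \sum_(i <- r) c i *: V 0 (phi i) t).
  by apply: IH => i ir; apply: H; rewrite inE ir orbT.
rewrite (_ : (fun s => phi0 s + \sum_(i <- a :: r) c i *: phi i s) =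
   (fun s => c a *: phi a s + (phi0 s + \sum_(i <- r) c i *: phi i s))); last first.
  by apply: funext => s; rewrite big_cons addrCA.
apply: ae_mono2 (V2 (c a) v0 La Lr) IH' => t _ -> ->.
by rewrite big_cons addrCA.
Qed.

Lemma V_ae v0 (phi phi' : R -> X) :
  L1_on `]0, T[ phi -> L1_on `]0, T[ phi' ->
  ae_on `]0, T[ (fun s => phi s = phi' s) ->
  ae_on `]0, T[ (fun t => V v0 phi t = V v0 phi' t).
Proof.
move=> L L' e.
have [LV SV] := V_sol v0 L.
suff W : w_solution T iA iU opA v0 phi' (V v0 phi) by exact: V_uniq W.
split => //; apply: ae_mono SV => t Tt [I1 [I2 [b1 [b2 e1]]]].
have tT : t <= T by move: Tt; rewrite /= in_itv /= => /andP[_ /ltW].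
exists I1, I2; split => //; split => //.
by apply: bochner_ae b2 _; exact: ae_sub (itv_sub tT) e.
Qed.

End Vlin.

Section Mindex.

Lemma big_widen_idx (Rr : Type) (idx : Rr) (op : Monoid.com_law idx) n m (G : nat -> Rr) :
  (n <= m)%N -> (forall i, (n <= i)%N -> G i = idx) ->
  \big[op/idx]_(i < n) G i = \big[op/idx]_(i < m) G i.
Proof.
move=> nm H; rewrite (big_ord_widen m G nm) big_mkcond; apply: eq_bigr => i _.
by case: ifP => // /negbT; rewrite -leqNgt => /H ->.
Qed.

Lemma sum_bound_indep (Rr : Type) (idx : Rr) (op : Monoid.com_law idx) (a : mindex) N N'
    (F : nat -> nat -> Rr) :
  mindex_bound a N -> mindex_bound a N' -> (forall i k, a i k = 0%N -> F i k = idx) ->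
  \big[op/idx]_(i < N) \big[op/idx]_(k < N) F i k =
  \big[op/idx]_(i < N') \big[op/idx]_(k < N') F i k.
Proof.
move=> bN bN' HF.
suff H M : mindex_bound a M -> forall M', (M <= M')%N ->
    \big[op/idx]_(i < M) \big[op/idx]_(k < M) F i k =
    \big[op/idx]_(i < M') \big[op/idx]_(k < M') F i k.
  by rewrite (H N bN (maxn N N') (leq_maxl _ _)) (H N' bN' (maxn N N') (leq_maxr _ _)).
move=> bM M' MM'.
transitivity (\big[op/idx]_(i < M) \big[op/idx]_(k < M') F i k).
  apply: eq_bigr => i _; apply: big_widen_idx => // k Mk.
  by apply: HF; apply: bM; right.
apply: (@big_widen_idx _ _ _ _ _ (fun i => \big[op/idx]_(k < M') F i k)) => // i Mi.
by rewrite big1 // => k _; apply: HF; apply: bM; left.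
Qed.

Definition Nb (a : mindex) : nat := xget 0%N (mindex_bound a).

Lemma Nb_bound a : is_mindex a -> mindex_bound a (Nb a).
Proof. by move=> [N bN]; apply: xgetPex; exists N. Qed.

Definition msize (a : mindex) : nat := (\sum_(i < Nb a) \sum_(k < Nb a) a i k)%N.

Lemma msizeE a N : is_mindex a -> mindex_bound a N ->
  msize a = (\sum_(i < N) \sum_(k < N) a i k)%N.
Proof. by move=> ia bN; apply: sum_bound_indep (Nb_bound ia) bN _. Qed.

Lemma mminus_bound a i k N : mindex_bound a N -> mindex_bound (mminus a i k) N.
Proof. by move=> bN j l jl; rewrite /mminus (bN j l jl); case: ifP. Qed.

Lemma mminus_is a i k : is_mindex a -> is_mindex (mminus a i k).
Proof. by move=> [N bN]; exists N; exact: mminus_bound. Qed.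

Lemma msize_mminus a i k : is_mindex a -> (0 < a i k)%N ->
  (msize (mminus a i k) < msize a)%N.
Proof.
move=> [N bN] pos.
have iN : (i < N)%N.
  by rewrite ltnNge; apply/negP => Ni; move: pos; rewrite (bN i k (or_introl Ni)).
have kN : (k < N)%N.
  by rewrite ltnNge; apply/negP => Nk; move: pos; rewrite (bN i k (or_intror Nk)).
rewrite (msizeE (ex_intro _ N (mminus_bound i k bN)) (mminus_bound i k bN)).
rewrite (msizeE (ex_intro _ N bN) bN) !pair_bigA /=.
rewrite (bigD1 (Ordinal iN, Ordinal kN)) //= [X in (_ < X)%N](bigD1 (Ordinal iN, Ordinal kN)) //=.
rewrite /mminus !eqxx /=.
rewrite (eq_bigr (fun p : 'I_N * 'I_N => a p.1 p.2)); last first.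
  move=> [p1 p2] /= hp; case: ifP => // /andP[/eqP e1 /eqP e2].
  move/eqP: hp; case; congr pair; apply: val_inj => /=; [exact: e1|exact: e2].
by rewrite ltn_add2r ltn_predL.
Qed.

Lemma mindex_ind (P : mindex -> Prop) :
  (forall a, is_mindex a -> (forall i k, (0 < a i k)%N -> P (mminus a i k)) -> P a) ->
  forall a, is_mindex a -> P a.
Proof.
move=> H.
suff S n : forall a, is_mindex a -> (msize a <= n)%N -> P a.
  by move=> a ia; exact: (S (msize a)).
elim: n => [|n IH] a ia sa; apply: H => // i k pos.
  by have := msize_mminus ia pos; rewrite leqn0 in sa; rewrite (eqP sa).
apply: IH; first exact: mminus_is.
have := msize_mminus ia pos => h; rewrite -ltnS; exact: leq_trans h sa.
Qed.

End Mindex.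

Section L1h.
Context {R : realType} {X : normedModType R}.
Local Notation MR := (measurableTypeR R).

Lemma L1_add (D : set MR) (f h : R -> X) : measurable D ->
  L1_on D f -> L1_on D h -> L1_on D (fun s => f s + h s).
Proof.
move=> mD Lf Lh; have := L1_comb 1 mD Lf Lh.
by rewrite (_ : (fun s => 1 *: f s + h s) = (fun s => f s + h s)) //; apply: funext => s; rewrite scale1r.
Qed.

Lemma L1_scale (D : set MR) (f : R -> X) (c : R) : measurable D ->
  L1_on D f -> L1_on D (fun s => c *: f s).
Proof.
move=> mD Lf; have := L1_comb c mD Lf (L1_zero mD).
by rewrite (_ : (fun s => c *: f s + 0) = (fun s => c *: f s)) //; apply: funext => s; rewrite addr0.
Qed.


Lemma ae_sum (D : set R) (I : eqType) (r : seq I) (F G : I -> R -> X) :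
  (forall i, i \in r -> ae_on D (fun t => F i t = G i t)) ->
  ae_on D (fun t => \sum_(i <- r) F i t = \sum_(i <- r) G i t).
Proof.
elim: r => [|a r IH] H; first by apply: ae_all => t _; rewrite !big_nil.
have Ha : ae_on D (fun t => F a t = G a t) by apply: H; rewrite inE eqxx.
have Hr : ae_on D (fun t => \sum_(i <- r) F i t = \sum_(i <- r) G i t).
  by apply: IH => i ir; apply: H; rewrite inE ir orbT.
by apply: ae_mono2 Ha Hr => t _ e1 e2; rewrite !big_cons e1 e2.
Qed.

End L1h.

Section Main.
Context {R : realType} {A X U : normedModType R}.
Local Notation mu := (@lebesgue_measure R).
Local Notation MR := (measurableTypeR R).
Context (T : R) (iA : {linear A -> X}) (iU : {linear U -> X}) (m : nat -> R -> R).
Context (m_meas : forall i, measurable_fun `]0, T[ (m i))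
  (m_bdd : forall i, exists C : R, ae_on `]0, T[ (fun t => `|m i t| <= C)).
Context (opA : (R -> A) -> R -> X) (opM : nat -> (R -> A) -> R -> X)
  (opA_lin : L1_operator T opA) (opM_lin : forall k, L1_operator T (opM k)).
Context (u0 : mindex -> U) (f : mindex -> R -> X) (g : nat -> mindex -> R -> X)
  (f_L1 : forall a, is_mindex a -> L1_on `]0, T[ (f a))
  (g_L1 : forall k a, is_mindex a -> L1_on `]0, T[ (g k a)).
Context (V : U -> (R -> X) -> R -> A)
  (V_sol : forall v0 phi, L1_on `]0, T[ phi ->
      w_solution T iA iU opA v0 phi (V v0 phi))
  (V_uniq : forall v0 phi v, L1_on `]0, T[ phi ->
      w_solution T iA iU opA v0 phi v ->
      ae_on `]0, T[ (fun t => v t = V v0 phi t)).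

Let mT := @itv_meas R T.

Definition Phi (a : mindex) (w : mindex -> R -> A) : R -> X := fun s =>
  f a s + \sum_(i < Nb a) \sum_(k < Nb a)
     (Num.sqrt (a i k)%:R * m i s) *: (opM k (w (mminus a i k)) s + g k (mminus a i k) s).

Lemma Phi_N a w N : is_mindex a -> mindex_bound a N ->
  Phi a w = fun s => f a s + \sum_(i < N) \sum_(k < N)
     (Num.sqrt (a i k)%:R * m i s) *: (opM k (w (mminus a i k)) s + g k (mminus a i k) s).
Proof.
move=> ia bN; apply: funext => s; rewrite /Phi; congr (_ + _).
apply: (@sum_bound_indep _ _ _ a _ _ (fun i k =>
   (Num.sqrt (a i k)%:R * m i s) *: (opM k (w (mminus a i k)) s + g k (mminus a i k) s))
   (Nb_bound ia) bN) => i k ->.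
by rewrite sqrtr0 mul0r scale0r.
Qed.

Lemma Phi_congr a w w' : (forall i k, (0 < a i k)%N -> w (mminus a i k) = w' (mminus a i k)) ->
  Phi a w = Phi a w'.
Proof.
move=> H; apply: funext => s; rewrite /Phi; congr (_ + _).
apply: eq_bigr => i _; apply: eq_bigr => k _.
have [->|pos] := posnP (a i k); first by rewrite sqrtr0 mul0r !scale0r.
by rewrite H.
Qed.

Fixpoint Uit (n : nat) : mindex -> R -> A :=
  match n with
  | 0 => fun _ _ => 0
  | n'.+1 => fun a => V (u0 a) (Phi a (Uit n'))
  end.

Definition usol (a : mindex) : R -> A := Uit (msize a).+1 a.

Lemma Uit_stable a : is_mindex a -> forall p, (msize a <= p)%N -> Uit p.+1 a = usol a.
Proof.
move: a; apply: mindex_ind => a ia IH p sp; rewrite /usol /=.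
congr (V _); apply: Phi_congr => i k pos.
have lt := msize_mminus ia pos.
case: p sp => [|p] sp; first by move: lt; rewrite leqn0 in sp; rewrite (eqP sp).
move: lt; case E: (msize a) => [|q] lt //.
rewrite IH //; last by rewrite -ltnS (leq_trans lt) // -E.
by rewrite IH // -ltnS.
Qed.

Lemma usol_eq a : is_mindex a -> usol a = V (u0 a) (Phi a usol).
Proof.
move=> ia; rewrite {1}/usol /=; congr (V _); apply: Phi_congr => i k pos.
have lt := msize_mminus ia pos.
move: lt; case E: (msize a) => [|q] lt //.
by rewrite Uit_stable //; apply: mminus_is.
Qed.


Lemma L1_Phi a w : is_mindex a ->
  (forall i k, (0 < a i k)%N -> L1_on `]0, T[ (w (mminus a i k))) ->
  L1_on `]0, T[ (Phi a w).
Proof.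
move=> ia H; rewrite /Phi; apply: L1_add mT (f_L1 ia) _.
apply: L1_sum => // i _; apply: L1_sum => // k _.
have [E|pos] := posnP (a i k).
  apply: L1_ae (L1_zero mT) _; apply: ae_all => s _.
  by rewrite E sqrtr0 mul0r scale0r.
rewrite (_ : (fun s => _) = fun s => Num.sqrt (a i k)%:R *:
    (m i s *: (opM k (w (mminus a i k)) s + g k (mminus a i k) s))); last first.
  by apply: funext => s; rewrite scalerA.
apply: L1_scale mT _; apply: L1_mul mT (m_meas i) (m_bdd i) _.
apply: L1_add mT _ (g_L1 k (mminus_is i k ia)).
by have [L _ _] := opM_lin k; apply: L; exact: H.
Qed.

Lemma usol_L1 a : is_mindex a -> L1_on `]0, T[ (Phi a usol).
Proof.
move: a; apply: mindex_ind => a ia IH; apply: L1_Phi => // i k pos.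
rewrite usol_eq; last exact: mminus_is.
by have [L _] := V_sol (u0 (mminus a i k)) (IH i k pos).
Qed.

Lemma usol_L1' a : is_mindex a -> L1_on `]0, T[ (usol a).
Proof.
by move=> ia; rewrite usol_eq //; have [L _] := V_sol (u0 a) (usol_L1 ia).
Qed.

Lemma usol_wc : wc_solution T iA iU opA opM m u0 f g usol.
Proof.
move=> a ia; split; first exact: usol_L1'.
move=> N bN.
have [_ S] := V_sol (u0 a) (usol_L1 ia).
have [_ SF] := V_sol 0 (f_L1 ia).
rewrite -(usol_eq ia) in S.
apply: ae_mono2 S SF => t Tt [I1 [I2 [b1 [b2 e1]]]] [F1 [F2 [c1 [c2 e2]]]].
exists (1 *: I1 + F2), (-1 *: F2 + I2); split; last split.
- apply: bochner_ext (bochner_comb 1 (itv_meas t) (itv_fin t) b1 c2) => s.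
  by rewrite scale1r.
- apply: bochner_ext (bochner_comb (-1) (itv_meas t) (itv_fin t) c2 b2) => s.
  by rewrite (Phi_N usol ia bN) scaleN1r addKr.
- by rewrite e1 scale1r scaleN1r !addrA addrK.
Qed.


Lemma usol_formula a N : is_mindex a -> mindex_bound a N ->
  ae_on `]0, T[ (fun t =>
         usol a t = V (u0 a) (f a) t
           + \sum_(i < N) \sum_(k < N) Num.sqrt (a i k)%:R *:
               V 0 (fun s => m i s *: opM k (usol (mminus a i k)) s) t
           + \sum_(i < N) \sum_(k < N) Num.sqrt (a i k)%:R *:
               V 0 (fun s => m i s *: g k (mminus a i k) s) t).
Proof.
move=> ia bN.
pose c := fun p : 'I_N * 'I_N => (Num.sqrt (a p.1 p.2)%:R : R).
pose O := fun (p : 'I_N * 'I_N) s => m p.1 s *: opM p.2 (usol (mminus a p.1 p.2)) s.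
pose G := fun (p : 'I_N * 'I_N) s => m p.1 s *: g p.2 (mminus a p.1 p.2) s.
have LO p : L1_on `]0, T[ (O p).
  apply: L1_mul mT (m_meas _) (m_bdd _) _.
  have [L _ _] := opM_lin p.2; apply: L; apply: usol_L1'; exact: mminus_is.
have LG p : L1_on `]0, T[ (G p).
  apply: L1_mul mT (m_meas _) (m_bdd _) _; apply: g_L1; exact: mminus_is.
have L0 : L1_on `]0, T[ (fun s => f a s + \sum_(p : 'I_N * 'I_N) c p *: O p s).
  apply: L1_add mT (f_L1 ia) _; apply: L1_sum => // p _; exact: L1_scale.
have H1 := @Vsum _ _ _ _ _ _ _ _ opA_lin _ V_sol V_uniq (u0 a) _ _ (index_enum _) c _
  L0 (fun p _ => LG p).
have H2 := @Vsum _ _ _ _ _ _ _ _ opA_lin _ V_sol V_uniq (u0 a) _ _ (index_enum _) c _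
  (f_L1 ia) (fun p _ => LO p).
have E : Phi a usol = fun s => (f a s + \sum_(p : 'I_N * 'I_N) c p *: O p s) +
                               \sum_(p : 'I_N * 'I_N) c p *: G p s.
  rewrite (Phi_N usol ia bN); apply: funext => s; rewrite -addrA; congr (_ + _).
  rewrite pair_bigA -big_split /=; apply: eq_bigr => p _.
  by rewrite /c /O /G scalerDr !scalerA.
rewrite {1}(usol_eq ia) E.
apply: ae_mono2 H1 H2 => t _ -> ->.
by rewrite !pair_bigA.
Qed.

Lemma wc_key w : wc_solution T iA iU opA opM m u0 f g w -> forall a, is_mindex a ->
  L1_on `]0, T[ (Phi a w) /\ ae_on `]0, T[ (fun t => w a t = V (u0 a) (Phi a w) t).
Proof.
move=> hw a ia.
have LP : L1_on `]0, T[ (Phi a w).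
  by apply: L1_Phi => // i k _; have [L _] := hw _ (mminus_is i k ia).
split => //; apply: V_uniq => //.
have [Lw P] := hw a ia; split => //.
have [_ SF] := V_sol 0 (f_L1 ia).
apply: ae_mono2 (P (Nb a) (Nb_bound ia)) SF => t Tt [I1 [I2 [b1 [b2 e1]]]] [F1 [F2 [c1 [c2 e2]]]].
exists (-1 *: F2 + I1), (1 *: F2 + I2); split; last split.
- apply: bochner_ext (bochner_comb (-1) (itv_meas t) (itv_fin t) c2 b1) => s.
  by rewrite scaleN1r addrC addrK.
- apply: bochner_ext (bochner_comb 1 (itv_meas t) (itv_fin t) c2 b2) => s.
  by rewrite scale1r.
- by rewrite e1 scale1r scaleN1r [- F2 + I1]addrC !addrA addrNK.
Qed.

Lemma wc_uniq u u' : wc_solution T iA iU opA opM m u0 f g u ->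
  wc_solution T iA iU opA opM m u0 f g u' ->
  forall a, is_mindex a -> ae_on `]0, T[ (fun t => u a t = u' a t).
Proof.
move=> hu hu'; apply: mindex_ind => a ia IH.
have [L1 e1] := wc_key hu ia.
have [L2 e2] := wc_key hu' ia.
have eP : ae_on `]0, T[ (fun s => Phi a u s = Phi a u' s).
  have S : ae_on `]0, T[ (fun s =>
     (\sum_(i < Nb a) \sum_(k < Nb a) (Num.sqrt (a i k)%:R * m i s) *:
        (opM k (u (mminus a i k)) s + g k (mminus a i k) s)) =
     \sum_(i < Nb a) \sum_(k < Nb a) (Num.sqrt (a i k)%:R * m i s) *:
        (opM k (u' (mminus a i k)) s + g k (mminus a i k) s)).
    apply: ae_sum => i _; apply: ae_sum => k _.
    have [E|pos] := posnP (a i k).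
      by apply: ae_all => s _; rewrite E sqrtr0 !mul0r !scale0r.
    have [Lb _] := hu _ (mminus_is i k ia).
    have [Lb' _] := hu' _ (mminus_is i k ia).
    have [_ cong _] := opM_lin k.
    by apply: ae_mono (cong _ _ Lb Lb' (IH i k pos)) => s _ ->.
  by apply: ae_mono S => s _ e; rewrite /Phi e.
have eV := V_ae V_sol V_uniq (u0 a) L1 L2 eP.
have e12 : ae_on `]0, T[ (fun t => u a t = V (u0 a) (Phi a u) t /\
                                   u' a t = V (u0 a) (Phi a u') t).
  by apply: ae_mono2 e1 e2 => t _ p q.
by apply: ae_mono2 e12 eV => t _ [-> ->] ->.
Qed.

End Main.
Unset Implicit Arguments. Set Strict Implicit. Set Printing Implicit Defensive.

Theorem theorem6p4 (R : realType) (A X U : completeNormedModType R) (T : R)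
  (hT : 0 < T)
  (iA : {linear A -> X}) (iA_cont : continuous iA) (iA_inj : injective iA)
  (iU : {linear U -> X}) (iU_cont : continuous iU) (iU_inj : injective iU)
  (m : nat -> R -> R)
  (m_meas : forall i, measurable_fun `]0, T[ (m i))
  (m_bdd : forall i, exists C : R, ae_on `]0, T[ (fun t => `|m i t| <= C))
  (m_orth : forall i j, (\int[@lebesgue_measure R]_(t in `]0%R, T[) (m i t * m j t)%:E
                         = (if i == j then 1 else 0)%:E)%E)
  (m_total : forall h : R -> R, measurable_fun `]0, T[ h ->
      (\int[@lebesgue_measure R]_(t in `]0%R, T[) (h t ^+ 2)%:E < +oo)%E ->
      (forall i, (\int[@lebesgue_measure R]_(t in `]0%R, T[) (h t * m i t)%:E)%E = 0%E) ->
      ae_on `]0, T[ (fun t => h t = 0))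
  (opA : (R -> A) -> R -> X) (opM : nat -> (R -> A) -> R -> X)
  (opA_lin : L1_operator T opA) (opM_lin : forall k, L1_operator T (opM k))
  (u0 : mindex -> U) (f : mindex -> R -> X) (g : nat -> mindex -> R -> X)
  (f_L1 : forall a, is_mindex a -> L1_on `]0, T[ (f a))
  (g_L1 : forall k a, is_mindex a -> L1_on `]0, T[ (g k a))
  (V : U -> (R -> X) -> R -> A)
  (V_sol : forall v0 phi, L1_on `]0, T[ phi ->
      w_solution T iA iU opA v0 phi (V v0 phi))
  (V_uniq : forall v0 phi v, L1_on `]0, T[ phi ->
      w_solution T iA iU opA v0 phi v ->
      ae_on `]0, T[ (fun t => v t = V v0 phi t)) :
  (exists u : mindex -> R -> A,
     wc_solution T iA iU opA opM m u0 f g u /\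
     forall a, is_mindex a -> forall N, mindex_bound a N ->
       ae_on `]0, T[ (fun t =>
         u a t = V (u0 a) (f a) t
           + \sum_(i < N) \sum_(k < N) Num.sqrt (a i k)%:R *:
               V 0 (fun s => m i s *: opM k (u (mminus a i k)) s) t
           + \sum_(i < N) \sum_(k < N) Num.sqrt (a i k)%:R *:
               V 0 (fun s => m i s *: g k (mminus a i k) s) t)) /\
  (forall u u' : mindex -> R -> A,
     wc_solution T iA iU opA opM m u0 f g u ->
     wc_solution T iA iU opA opM m u0 f g u' ->
     forall a, is_mindex a -> ae_on `]0, T[ (fun t => u a t = u' a t)).
Proof.
split.
  exists (usol m opM u0 f g V); split.
    exact: (usol_wc m_meas m_bdd opM_lin u0 f_L1 g_L1 V_sol).
  move=> a ia N bN.
  exact: (usol_formula m_meas m_bdd opA_lin opM_lin u0 f_L1 g_L1 V_sol V_uniq ia bN).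
move=> u u' hu hu'.
exact: (wc_uniq m_meas m_bdd opM_lin f_L1 g_L1 V_sol V_uniq hu hu').
Qed.
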